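(* Let $m\mid n$ with $n\ge 3$. Let $A(Y_0,\dots,Y_{m-1})\in\mathbb C[Y_0,\dots,Y_{m-1}]$ be such that for every $\sigma\in S_m$, $A(Y_{\sigma(0)},\dots,Y_{\sigma(m-1)})=\pm A(Y_0,\dots,Y_{m-1})$. Let $B(Z_0,\dots,Z_{n/m-1})\in\mathbb C[Z_0,\dots,Z_{n/m-1}]$ be symmetric, let $B_i=B(X_i,X_{i+m},\dots,X_{i+(n/m-1)m})$ for $0\le i\le m-1$, and let $F=A(B_0,\dots,B_{m-1})\in\mathbb C[X_0,\dots,X_{n-1}]$. Assume $\deg_{X_0}F(X_0,0,\dots,0)>0$. Then $\prod_{\phi\in\mathcal E_{n,m}}\phi(F)\in\mathbb C[X_0,\dots,X_{n-1}]$ is symmetric in $X_0,\dots,X_{n-1}$.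
   Context: The symmetric group $S_n$ of permutations of $\{0,1,\dots,n-1\}$ (identified with $\mathbb Z/n\mathbb Z$) acts on $\mathbb C[X_0,\dots,X_{n-1}]$ by permuting indices of the indeterminates. Partition $\{0,\dots,n-1\}$ into blocks $I_i=\{i+mj:0\le j\le n/m-1\}$, $0\le i\le m-1$. Let $\mathcal P_{n,m}$ be the set of all unordered partitions of $\{0,1,\dots,n-1\}$ into $m$ parts of size $n/m$. For each $\{P_0,\dots,P_{m-1}\}\in\mathcal P_{n,m}$ choose a permutation $\phi_{\{P_0,\dots,P_{m-1}\}}\in S_n$ mapping $I_i$ onto $P_i$ for $0\le i\le m-1$, and let $\mathcal E_{n,m}=\{\phi_{\{P_0,\dots,P_{m-1}\}}:\{P_0,\dots,P_{m-1}\}\in\mathcal P_{n,m}\}$; this is a left transversal in $S_n$ of the wreath product $S_m\wr S_{n/m}$, the subgroup of permutations that permute the blocks $I_i$ among themselves and permute elements within blocks. *)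

(* Defs.v *)
From mathcomp Require Import all_boot all_algebra all_fingroup.
From mathcomp Require Import Rstruct.
From mathcomp.real_closed Require Import complex.
From mathcomp Require Export mpoly.

Import GRing.Theory.
Local Open Scope ring_scope.

Definition C : comUnitRingType := complex Rdefinitions.R.

(* The variable X_{i + j m} of C[X_0..X_{n-1}] (the guard i + j m < n always
   holds when m | n, i < m, j < n/m). *)
Definition blockvar (n m : nat) (i : 'I_m) (j : 'I_(n %/ m)) : {mpoly C[n]} :=
  oapp (fun x : 'I_n => 'X_x) 0 (insub (i + j * m)%N).

Definition Bpart (n m : nat) (B : {mpoly C[n %/ m]}) (i : 'I_m) : {mpoly C[n]} :=
  B \mPo [tuple blockvar n m i j | j < (n %/ m)%N].

Definition Fpoly (n m : nat) (A : {mpoly C[m]}) (B : {mpoly C[n %/ m]})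
  : {mpoly C[n]} :=
  A \mPo [tuple Bpart n m B i | i < m].

Definition restrX0 (n : nat) (F : {mpoly C[n]}) : {poly C} :=
  mmap (@polyC C) (fun j : 'I_n => if val j == 0%N then 'X else 0) F.

(* The block I_i = {i + m j : 0 <= j <= n/m - 1} = {x < n | x = i mod m}. *)
Definition block (n m : nat) (i : 'I_m) : {set 'I_n} :=
  [set x : 'I_n | (x %% m == i)%N].

Definition partitions_nm (n m : nat) : {set {set {set 'I_n}}} :=
  [set P | [&& partition P [set: 'I_n], #|P| == m
             & [forall S in P, #|S| == (n %/ m)%N]]].

(* phi restricted to P_{n,m} is a choice of permutations phi_P mapping the
   blocks I_0..I_{m-1} onto the parts of P (in some order), i.e. its image on
   P_{n,m} is a set E_{n,m} as in the paper. *)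
Definition transversal_choice (n m : nat) (phi : {set {set 'I_n}} -> 'S_n) :=
  forall P, P \in partitions_nm n m ->
    [set (phi P) @: block n m i | i : 'I_m] = P.

(* Main.v *)
Require Import Defs.
From mathcomp Require Import all_boot all_algebra all_fingroup.
From mathcomp Require Import mpoly.
From mathcomp Require Import zify.
From mathcomp Require Import Rstruct.
From mathcomp.real_closed Require Import complex.
Import GRing.Theory Num.Theory.
Local Open Scope ring_scope.

Lemma mmap_morph (n k : nat) (R S : comRingType)
  (g : {rmorphism {mpoly R[k]} -> S}) (h : 'I_n -> {mpoly R[k]}) (p : {mpoly R[n]}) :
  g (mmap (@mpolyC k R) h p) = mmap (g \o (@mpolyC k R)) (g \o h) p.
Proof.
rewrite /mmap rmorph_sum; apply: eq_bigr => m _; rewrite rmorphM /mmap1 rmorph_prod.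
by congr (_ * _); apply: eq_bigr => i _; rewrite rmorphXn.
Qed.

Lemma mmap_ext (n : nat) (R S : ringType) (f1 f2 : R -> S) (h1 h2 : 'I_n -> S) p :
  f1 =1 f2 -> h1 =1 h2 -> mmap f1 h1 p = mmap f2 h2 p.
Proof.
move=> ef eh; rewrite /mmap; apply: eq_bigr => m _; rewrite ef; congr (_ * _).
exact: mmap1_eq.
Qed.

Lemma msymXU (n : nat) (R : comRingType) (s : 'S_n) (i : 'I_n) :
  msym s ('X_i : {mpoly R[n]}) = 'X_(s i).
Proof. by rewrite /msym mmapX mmap1U. Qed.

Lemma msym_comp (n k : nat) (R : comRingType) (w : 'S_k) (p : {mpoly R[n]})
   (T : n.-tuple {mpoly R[k]}) :
  msym w (p \mPo T) = p \mPo [tuple msym w (tnth T i) | i < n].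
Proof.
rewrite /comp_mpoly (@mmap_morph _ _ _ _ (msym w)); apply: mmap_ext => [c|i] /=.
  by rewrite /msym mmapC.
by rewrite tnth_mktuple.
Qed.

Lemma ev_msym (n : nat) (R : comRingType) (h : 'I_n -> {poly R}) (s : 'S_n) p :
  mmap (@polyC R) h (msym s p) = mmap (@polyC R) (h \o s) p.
Proof.
rewrite /msym (@mmap_morph _ _ _ _ (mmap (@polyC R) h)); apply: mmap_ext => [c|i] /=.
  by rewrite mmapC.
by rewrite mmapX mmap1U.
Qed.

Lemma ev_comp (n k : nat) (R : comRingType) (h : 'I_k -> {poly R}) p (T : n.-tuple {mpoly R[k]}) :
  mmap (@polyC R) h (p \mPo T) = mmap (@polyC R) (fun i => mmap (@polyC R) h (tnth T i)) p.
Proof.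
rewrite /comp_mpoly (@mmap_morph _ _ _ _ (mmap (@polyC R) h)); apply: mmap_ext => [c|i] //=.
by rewrite mmapC.
Qed.

Definition Cf : idomainType := complex Rdefinitions.R.
Lemma selfneg0 (p : {poly C}) : p = -p -> p = 0.
Proof.
move=> h; apply/eqP.
have : (2%:R : {poly Cf}) * p == 0 by rewrite mulr_natl mulr2n {1}h addNr.
rewrite mulf_eq0 => /orP[|//].
rewrite -polyC_natr polyC_eq0.
by rewrite (@pnatr_eq0 (complex Rdefinitions.R)).
Qed.


Lemma bv_proof n m (hmn : (m %| n)%N) (i : 'I_m) (j : 'I_(n %/ m)) : (i + j * m < n)%N.
Proof.
have hn : n = (n %/ m * m)%N by rewrite divnK.
have hi := ltn_ord i; have hj := ltn_ord j.
move: (nat_of_ord i) (nat_of_ord j) hi hj => a b ha hb.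
move: (n %/ m)%N hn hb => d hn hb; rewrite hn; nia.
Qed.

Definition bv n m hmn i j : 'I_n := Ordinal (@bv_proof n m hmn i j).
Arguments bv {n m}.

Lemma blockvarE n m (hmn : (m %| n)%N) i j : blockvar n m i j = 'X_(bv hmn i j).
Proof.
rewrite /blockvar insubT /=; first exact: bv_proof.
by move=> H; have -> : Sub (i + j * m)%N H = bv hmn i j by apply: val_inj.
Qed.

Lemma Bpart_msym n m (hmn : (m %| n)%N) (hm0 : (0 < m)%N) (B : {mpoly C[n %/ m]})
  (hB : B \is symmetric) (w : 'S_n) (i ti : 'I_m)
  (Ht : forall j, (w (bv hmn i j) %% m)%N = ti) :
  msym w (Bpart n m B i) = Bpart n m B ti.
Proof.
have pf j : (w (bv hmn i j) %/ m < n %/ m)%N.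
  by rewrite ltn_divLR // divnK.
pose pif j : 'I_(n %/ m) := Ordinal (pf j).
have wE j : w (bv hmn i j) = bv hmn ti (pif j).
  apply: val_inj => /=; rewrite -(Ht j) addnC; exact: divn_eq.
have pinj : injective pif.
  move=> j1 j2 e; have := wE j1; rewrite e -wE => /perm_inj /(congr1 val) /= e2.
  apply: val_inj; apply/eqP; rewrite -(eqn_pmul2r hm0); apply/eqP; exact: addnI e2.
pose pi := perm pinj.
rewrite /Bpart msym_comp.
have -> : [tuple msym w (tnth [tuple blockvar n m i j | j < n %/ m] j) | j < n %/ m] =
   [tuple tnth [tuple blockvar n m ti j | j < n %/ m] (pi j) | j < n %/ m].
  by apply: eq_mktuple => j; rewrite !tnth_mktuple !blockvarE msymXU wE permE.
by rewrite -msym_mPo (issymP _ hB).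
Qed.

Lemma F_msym n m (hmn : (m %| n)%N) (hn0 : (0 < n)%N) (A : {mpoly C[m]}) (B : {mpoly C[n %/ m]})
  (hA : forall s : 'S_m, msym s A = A \/ msym s A = - A)
  (hB : B \is symmetric) (w : 'S_n)
  (Hw : forall x y : 'I_n, (x %% m == y %% m)%N = (w x %% m == w y %% m)%N) :
  msym w (Fpoly n m A B) = Fpoly n m A B \/ msym w (Fpoly n m A B) = - Fpoly n m A B.
Proof.
have hm0 : (0 < m)%N.
  rewrite lt0n; apply/negP => /eqP m0; move: hmn; rewrite m0 dvd0n; lia.
have le_mn : (m <= n)%N := dvdn_leq hn0 hmn.
pose wi (i : 'I_m) : 'I_n := Ordinal (leq_trans (ltn_ord i) le_mn).
pose tf i : 'I_m := Ordinal (ltn_pmod (w (wi i)) hm0).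
have Ht : forall i j, (w (bv hmn i j) %% m)%N = tf i.
  move=> i j /=; apply/eqP; rewrite -Hw /=; by rewrite addnC modnMDl.
have tinj : injective tf.
  move=> i1 i2 /(congr1 val) /= /eqP; rewrite -Hw /=.
  rewrite (modn_small (ltn_ord i1)) (modn_small (ltn_ord i2)) => /eqP; exact: val_inj.
pose t := perm tinj.
rewrite /Fpoly msym_comp.
have -> : [tuple msym w (tnth [tuple Bpart n m B i | i < m] i) | i < m] =
          [tuple tnth [tuple Bpart n m B i | i < m] (t i) | i < m].
  apply: eq_mktuple => i; rewrite !tnth_mktuple permE; exact: Bpart_msym.
rewrite -msym_mPo; case: (hA t) => ->; [left|right] => //.
by rewrite comp_mpolyN.
Qed.

Lemma prod_pm (R : comRingType) (I : finType) (a : pred I) (f g : I -> R) :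
  (forall i, a i -> f i = g i \/ f i = - g i) ->
  \prod_(i | a i) f i = \prod_(i | a i) g i \/ \prod_(i | a i) f i = - \prod_(i | a i) g i.
Proof.
move=> h; apply: (big_ind2 (fun x y => x = y \/ x = - y)); first by left.
  move=> x1 x2 y1 y2 [->|->] [->|->]; rewrite ?mulrNN ?mulrN ?mulNr; by [left|right].
exact: h.
Qed.

Lemma blockmap n m (hm0 : (0 < m)%N) (w : 'S_n)
  (Hb : forall i : 'I_m, exists j : 'I_m, w @: block n m i = block n m j) :
  forall x y : 'I_n, (x %% m == y %% m)%N = (w x %% m == w y %% m)%N.
Proof.
move=> x y.
pose ix : 'I_m := Ordinal (ltn_pmod x hm0).
have [jx hjx] := Hb ix.
have wxj : (w x %% m)%N = jx.
  have : w x \in block n m jx by rewrite -hjx imset_f // inE.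
  by rewrite inE => /eqP.
apply/idP/idP => [/eqP hxy | /eqP hw].
  have : w y \in block n m jx by rewrite -hjx imset_f // inE /= hxy.
  by rewrite inE => /eqP ->; rewrite wxj.
have : w y \in w @: block n m ix by rewrite hjx inE -wxj hw.
by rewrite mem_imset ?inE /=; [move=> /eqP -> | exact: perm_inj].
Qed.

Lemma rot_exists n m (hmn : (m %| n)%N) (hn0 : (0 < n)%N) (k : 'I_n) :
  exists r : 'S_n, r (Ordinal hn0) = k /\
    forall x y : 'I_n, (x %% m == y %% m)%N = (r x %% m == r y %% m)%N.
Proof.
pose rf (x : 'I_n) : 'I_n := Ordinal (ltn_pmod (x + k) hn0).
have rinj : injective rf.
  move=> x y /(congr1 val) /= /eqP; rewrite eqn_modDr.
  rewrite (modn_small (ltn_ord x)) (modn_small (ltn_ord y)) => /eqP; exact: val_inj.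
exists (perm rinj); split.
  by apply: val_inj; rewrite permE /= add0n modn_small.
by move=> x y; rewrite !permE /= !modn_dvdm // eqn_modDr.
Qed.

Arguments rot_exists {n m}.
Arguments F_msym {n m} hmn hn0 {A B} hA hB {w}.
Arguments blockmap {n m} hm0 {w}.
Definition gk n (k : 'I_n) : 'I_n -> {poly C} := fun x => if x == k then 'X else 0.
Arguments gk {n}.
Definition ev n (k : 'I_n) (p : {mpoly C[n]}) := mmap (@polyC C) (gk k) p.
Arguments ev {n}.

Lemma ev_perm n (k : 'I_n) (s : 'S_n) p : ev k (msym s p) = ev (s^-1 k)%g p.
Proof.
rewrite /ev ev_msym; apply: mmap_ext => // x /=; rewrite /gk.
by rewrite -[s x == k](inj_eq (@perm_inj _ s^-1)) permK.
Qed.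

Lemma ev_F_neq0 n m (hmn : (m %| n)%N) (hn0 : (0 < n)%N) (A : {mpoly C[m]}) (B : {mpoly C[n %/ m]})
  (hA : forall s : 'S_m, msym s A = A \/ msym s A = - A)
  (hB : B \is symmetric)
  (hdeg : (0 < (size (restrX0 n (Fpoly n m A B))).-1)%N) (k : 'I_n) :
  ev k (Fpoly n m A B) != 0.
Proof.
have [r [r0 Hr]] := rot_exists hmn hn0 k.
have e0 : ev (Ordinal hn0) (Fpoly n m A B) = restrX0 n (Fpoly n m A B).
  by rewrite /ev /restrX0; apply: mmap_ext.
have e1 : ev k (msym r (Fpoly n m A B)) = ev (Ordinal hn0) (Fpoly n m A B).
  by rewrite ev_perm -r0 permK.
apply/negP => /eqP h; move: hdeg.
case: (F_msym hmn hn0 hA hB Hr) => e; rewrite e in e1;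
  by rewrite -e0 -e1 /ev ?mmapN -/(ev k _) h ?oppr0 size_poly0.
Qed.

Definition act n (s : 'S_n) (P : {set {set 'I_n}}) : {set {set 'I_n}} :=
  [set s @: (S : {set 'I_n}) | S in P].
Arguments act {n}.

Lemma imset_permT n (s : 'S_n) : s @: [set: 'I_n] = [set: 'I_n].
Proof.
by apply/setP => x; rewrite inE; apply/imsetP; exists (s^-1 x)%g; rewrite ?inE ?permKV.
Qed.

Arguments imset_permT {n}.
Lemma act_parts n m (s : 'S_n) P : P \in partitions_nm n m -> act s P \in partitions_nm n m.
Proof.
rewrite !inE => /and3P[hp hc hS]; apply/and3P; split.
- by rewrite -(imset_permT s) /act imset_partition //; exact: perm_inj.
- by rewrite card_imset //; apply: imset_inj; exact: perm_inj.
- apply/forall_inP => S /imsetP[S0 hS0 ->]; rewrite card_imset; last exact: perm_inj.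
  exact: (forall_inP hS).
Qed.

Arguments act_parts {n m} s {P}.
Lemma act_K n (s : 'S_n) : cancel (act s) (act s^-1).
Proof.
move=> P; rewrite /act -imset_comp (@eq_imset _ _ _ (fun x => x)) ?imset_id // => S /=.
rewrite -imset_comp (@eq_imset _ _ _ (fun x => x)) ?imset_id // => x /=.
exact: permK.
Qed.

Arguments act_K {n}.
Lemma reindex_act (R : comRingType) (T : finType) (D : {set T}) (h hinv : T -> T)
  (F : T -> R) : cancel h hinv -> (forall x, x \in D -> h x \in D) ->
  (forall x, x \in D -> hinv x \in D) ->
  \prod_(x in D) F x = \prod_(x in D) F (h x).
Proof.
move=> hK hD hiD; rewrite (reindex_inj (can_inj hK)); apply: eq_bigl => x.
apply/idP/idP; last exact: hD.
by move=> /hiD; rewrite hK.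
Qed.

Theorem lemma5p2 (n m : nat) (hmn : (m %| n)%N) (hn : (3 <= n)%N)
  (A : {mpoly C[m]}) (B : {mpoly C[n %/ m]})
  (hA : forall s : 'S_m, msym s A = A \/ msym s A = - A)
  (hB : B \is symmetric)
  (hdeg : (0 < (size (restrX0 n (Fpoly n m A B))).-1)%N)
  (phi : {set {set 'I_n}} -> 'S_n) (hphi : transversal_choice n m phi) :
  \prod_(P in partitions_nm n m) msym (phi P) (Fpoly n m A B) \is symmetric.
Proof.
have hn0 : (0 < n)%N by lia.
have hm0 : (0 < m)%N.
  rewrite lt0n; apply/negP => /eqP m0; move: hmn; rewrite m0 dvd0n; lia.
set F := Fpoly n m A B.
set G := \prod_(P in partitions_nm n m) msym (phi P) F.
have sgn : forall s, msym s G = G \/ msym s G = - G.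
  move=> s.
  have eG : G = \prod_(P in partitions_nm n m) msym (phi (act s P)) F.
    rewrite /G; apply (@reindex_act {mpoly C[n]} _ (partitions_nm n m) _ _
      (fun P => msym (phi P) F) (act_K s)); move=> P; exact: act_parts.
  have -> : msym s G = \prod_(P in partitions_nm n m) msym s (msym (phi P) F).
    rewrite /G; apply (rmorph_prod (msym s)).
  rewrite eG.
  apply: prod_pm => P hP; rewrite -msymMm.
  set phi' := phi (act s P).
  pose w := (phi P * s * phi'^-1)%g.
  have -> : (phi P * s)%g = (w * phi')%g by rewrite /w mulgKV.
  have Hb : forall i : 'I_m, exists j : 'I_m, w @: block n m i = block n m j.
    move=> i.
    have h1 : phi P @: block n m i \in P.
      rewrite -[in X in _ \in X](hphi P hP); apply/imsetP; by exists i.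
    have h2 : s @: (phi P @: block n m i) \in act s P by apply: imset_f.
    rewrite -(hphi _ (act_parts s hP)) in h2.
    case/imsetP: h2 => j _ hj; exists j.
    have -> : w @: block n m i = phi'^-1%g @: (s @: (phi P @: block n m i)).
      by rewrite -!imset_comp; apply: eq_imset => x; rewrite /w !permM.
    rewrite hj -imset_comp.
    apply (etrans (@eq_imset _ _ _ (fun x => x) _ (permK phi'))).
    apply imset_id.
  rewrite msymMm.
  case: (F_msym hmn hn0 hA hB (blockmap hm0 Hb)) => e; rewrite e;
    [left; reflexivity | right; apply msymN].
have nz : forall k, ev k G != 0.
  move=> k; rewrite /G /ev rmorph_prod.
  apply: (big_ind (fun x : {poly C} => x != 0)).
  - exact: oner_neq0.
  - by move=> x y hx hy; exact: (@mulf_neq0 {poly Cf} x y).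
  - move=> P _; change (ev k (msym (phi P) F) != 0); rewrite ev_perm.
    exact (@ev_F_neq0 n m hmn hn0 A B hA hB hdeg _).
have tp : forall a b : 'I_n, msym (tperm a b) G = G.
  move=> a b.
  have [k hk] : exists k : 'I_n, (val a != val k) && (val b != val k).
    have h3 v : (v < 3)%N -> (v < n)%N by move=> hv; lia.
    case: a b => [x hx] [y hy] /=.
    case: (boolP ((x != 0%N) && (y != 0%N))) => h0.
      by exists (Ordinal (h3 0%N erefl)).
    case: (boolP ((x != 1%N) && (y != 1%N))) => h1.
      by exists (Ordinal (h3 1%N erefl)).
    exists (Ordinal (h3 2%N erefl)) => /=; move: h0 h1; rewrite !negb_and !negbK.
    lia.
  case/andP: hk => hak hbk.
  have ek : ev k (msym (tperm a b) G) = ev k G.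
    by rewrite ev_perm tpermV tpermD.
  case: (sgn (tperm a b)) => // h; rewrite h /ev mmapN -/(ev k G) in ek.
  exfalso; apply: (negP (nz k)); apply/eqP; apply: selfneg0.
  by rewrite -[LHS]ek.
apply/issymP => s; have [ts -> _] := prod_tpermP s.
elim: ts => [|t ts IH]; first by rewrite big_nil msym1m.
by rewrite big_cons msymMm tp IH.
Qed.
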